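(* Let $G$ be a proper, Polishable, strongly dense subgroup of $\mathbb{T}^\mathbb{N}$. Then the action of $G$ on $\mathbb{T}^\mathbb{N}$ by (coordinatewise multiplicative) translation, with $G$ carrying its Polish group topology, is turbulent.
   Context: $\mathbb{T}=\{z\in\mathbb{C}:|z|=1\}$, and $\mathbb{T}^\mathbb{N}$ carries the product topology and coordinatewise multiplication. A subgroup $G\le\mathbb{T}^\mathbb{N}$ is Polishable if it is a Borel subset and admits a Polish group topology whose Borel sets are exactly the Borel subsets of $\mathbb{T}^\mathbb{N}$ contained in $G$. $G$ is strongly dense if for every finite sequence $(z_0,\dots,z_n)$ of elements of $\mathbb{T}$ there is $g\in G$ with $g_i=z_i$ for all $i\le n$. For a continuous action of a Polish group $G$ on a Polish space $X$, $U\subseteq X$ open, $V\subseteq G$ a symmetric open neighborhood of the identity, and $x\in U$, the local orbit $\mathcal{O}(x,U,V)$ is the set of $y\in U$ for which there are $g_0,\dots,g_k\in V$ and $x=x_0,\dots,x_{k+1}=y$ all in $U$ with $x_{i+1}=g_i\cdot x_i$ for $i\le k$. The action is turbulent if every orbit is dense, every orbit is meager, and every local orbit $\mathcal{O}(x,U,V)$ has closure with nonempty interior. *)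

(* Defs.v *)
From Stdlib Require Import Reals Lra Psatz.
Open Scope R_scope.

Definition Tpt : Type := { p : R * R | fst p * fst p + snd p * snd p = 1 }.

Lemma tmul_ok (z w : Tpt) :
  let a := fst (proj1_sig z) in let b := snd (proj1_sig z) in
  let c := fst (proj1_sig w) in let d := snd (proj1_sig w) in
  (a * c - b * d) * (a * c - b * d) + (a * d + b * c) * (a * d + b * c) = 1.
Proof.
  destruct z as [[a b] Hz]; destruct w as [[c d] Hw]; simpl in *.
  replace ((a * c - b * d) * (a * c - b * d) + (a * d + b * c) * (a * d + b * c))
    with ((a * a + b * b) * (c * c + d * d)) by ring.
  rewrite Hz, Hw; ring.
Qed.

(* complex multiplication restricted to T *)
Definition tmul (z w : Tpt) : Tpt :=
  exist _ (fst (proj1_sig z) * fst (proj1_sig w) - snd (proj1_sig z) * snd (proj1_sig w),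
           fst (proj1_sig z) * snd (proj1_sig w) + snd (proj1_sig z) * fst (proj1_sig w))
        (tmul_ok z w).

Lemma tinv_ok (z : Tpt) :
  fst (proj1_sig z) * fst (proj1_sig z) + (- snd (proj1_sig z)) * (- snd (proj1_sig z)) = 1.
Proof. destruct z as [[a b] Hz]; simpl in *; lra. Qed.

Definition tinv (z : Tpt) : Tpt :=
  exist _ (fst (proj1_sig z), - snd (proj1_sig z)) (tinv_ok z).

Lemma tone_ok : fst (1, 0) * fst (1, 0) + snd (1, 0) * snd (1, 0) = 1.
Proof. simpl; lra. Qed.

Definition tone : Tpt := exist _ (1, 0) tone_ok.

Definition tdist (z w : Tpt) : R :=
  sqrt ((fst (proj1_sig z) - fst (proj1_sig w)) ^ 2 + (snd (proj1_sig z) - snd (proj1_sig w)) ^ 2).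

Definition TN : Type := nat -> Tpt.
Definition TNmul (x y : TN) : TN := fun i => tmul (x i) (y i).
Definition TNinv (x : TN) : TN := fun i => tinv (x i).
Definition TNone : TN := fun _ => tone.

Definition is_topology {X : Type} (O : (X -> Prop) -> Prop) : Prop :=
  (forall U V : X -> Prop, (forall x, U x <-> V x) -> O U -> O V) /\
  O (fun _ => True) /\
  (forall U V, O U -> O V -> O (fun x => U x /\ V x)) /\
  (forall F : (X -> Prop) -> Prop, (forall U, F U -> O U) ->
     O (fun x => exists U, F U /\ U x)).

(* the product topology on T^N: U is open iff around each of its points it
   contains a basic cylinder (finitely many coordinates constrained to
   Euclidean balls of a common radius) *)
Definition TN_open (U : TN -> Prop) : Prop :=
  forall x, U x -> exists (n : nat) (eps : R), 0 < eps /\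
    forall y, (forall i, (i <= n)%nat -> tdist (x i) (y i) < eps) -> U y.

Definition metric {X : Type} (d : X -> X -> R) : Prop :=
  (forall x y, 0 <= d x y) /\ (forall x y, d x y = 0 <-> x = y) /\
  (forall x y, d x y = d y x) /\ (forall x y z, d x z <= d x y + d y z).

Definition metric_open {X : Type} (d : X -> X -> R) (U : X -> Prop) : Prop :=
  forall x, U x -> exists eps, 0 < eps /\ forall y, d x y < eps -> U y.

Definition complete_metric {X : Type} (d : X -> X -> R) : Prop :=
  forall s : nat -> X,
    (forall eps, 0 < eps -> exists N, forall m n, (N <= m)%nat -> (N <= n)%nat -> d (s m) (s n) < eps) ->
    exists l, forall eps, 0 < eps -> exists N, forall n, (N <= n)%nat -> d (s n) l < eps.

Definition separable {X : Type} (O : (X -> Prop) -> Prop) : Prop :=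
  (forall x : X, False) \/
  exists s : nat -> X, forall U, O U -> (exists x, U x) -> exists n, U (s n).

Definition polish {X : Type} (O : (X -> Prop) -> Prop) : Prop :=
  is_topology O /\ separable O /\
  exists d : X -> X -> R, metric d /\ complete_metric d /\
    (forall U, O U <-> metric_open d U).

Definition sigma_algebra {X : Type} (S : (X -> Prop) -> Prop) : Prop :=
  (forall A B : X -> Prop, (forall x, A x <-> B x) -> S A -> S B) /\
  S (fun _ => True) /\
  (forall A, S A -> S (fun x => ~ A x)) /\
  (forall A : nat -> (X -> Prop), (forall n, S (A n)) -> S (fun x => exists n, A n x)).

Definition borel {X : Type} (O : (X -> Prop) -> Prop) (A : X -> Prop) : Prop :=
  forall S, sigma_algebra S -> (forall U, O U -> S U) -> S A.

Definition interior {X : Type} (O : (X -> Prop) -> Prop) (A : X -> Prop) : X -> Prop :=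
  fun x => exists U, O U /\ U x /\ forall y, U y -> A y.

Definition closure {X : Type} (O : (X -> Prop) -> Prop) (A : X -> Prop) : X -> Prop :=
  fun x => forall U, O U -> U x -> exists y, U y /\ A y.

Definition dense {X : Type} (O : (X -> Prop) -> Prop) (A : X -> Prop) : Prop :=
  forall x, closure O A x.

Definition nowhere_dense {X : Type} (O : (X -> Prop) -> Prop) (A : X -> Prop) : Prop :=
  forall x, ~ interior O (closure O A) x.

Definition meager {X : Type} (O : (X -> Prop) -> Prop) (A : X -> Prop) : Prop :=
  exists N : nat -> (X -> Prop), (forall n, nowhere_dense O (N n)) /\
    forall x, A x -> exists n, N n x.

Definition subgroup (G : TN -> Prop) : Prop :=
  G TNone /\ (forall x y, G x -> G y -> G (TNmul x y)) /\ (forall x, G x -> G (TNinv x)).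

Definition proper_subgroup (G : TN -> Prop) : Prop := exists x, ~ G x.

Definition strongly_dense (G : TN -> Prop) : Prop :=
  forall (n : nat) (z : nat -> Tpt), exists g, G g /\ forall i, (i <= n)%nat -> g i = z i.

Definition Gsub (G : TN -> Prop) : Type := { x : TN | G x }.

(* tau is a topological group topology on G: (g,h) |-> g h^{-1} is continuous *)
Definition group_topology (G : TN -> Prop) (tau : (Gsub G -> Prop) -> Prop) : Prop :=
  forall W (g h k : Gsub G), tau W ->
    proj1_sig k = TNmul (proj1_sig g) (TNinv (proj1_sig h)) -> W k ->
    exists U V, tau U /\ tau V /\ U g /\ V h /\
      forall g' h' k' : Gsub G, U g' -> V h' ->
        proj1_sig k' = TNmul (proj1_sig g') (TNinv (proj1_sig h')) -> W k'.

Definition compatible_polish_group_topology (G : TN -> Prop)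
    (tau : (Gsub G -> Prop) -> Prop) : Prop :=
  polish tau /\ group_topology G tau /\
  forall A : Gsub G -> Prop,
    borel tau A <-> borel TN_open (fun x => exists g : Gsub G, proj1_sig g = x /\ A g).

Definition polishable (G : TN -> Prop) : Prop :=
  borel TN_open G /\ exists tau, compatible_polish_group_topology G tau.

Definition act {G : TN -> Prop} (g : Gsub G) (x : TN) : TN := TNmul (proj1_sig g) x.

Definition action_continuous (G : TN -> Prop) (tau : (Gsub G -> Prop) -> Prop) : Prop :=
  forall W g x, TN_open W -> W (act g x) ->
    exists U V, tau U /\ TN_open V /\ U g /\ V x /\
      forall g' x', U g' -> V x' -> W (act g' x').

Definition orbit {G : TN -> Prop} (x : TN) : TN -> Prop :=
  fun y => exists g : Gsub G, y = act g x.

Inductive lchain {G : TN -> Prop} (U : TN -> Prop) (V : Gsub G -> Prop) (x : TN) : TN -> Prop :=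
  | lchain0 : U x -> lchain U V x x
  | lchainS : forall y (g : Gsub G), lchain U V x y -> V g -> U (act g y) ->
              lchain U V x (act g y).

(* local orbit O(x,U,V): reachable in k+1 >= 1 steps *)
Definition local_orbit {G : TN -> Prop} (x : TN) (U : TN -> Prop) (V : Gsub G -> Prop)
  : TN -> Prop :=
  fun y => exists (y' : TN) (g : Gsub G),
    lchain U V x y' /\ V g /\ U (act g y') /\ y = act g y'.

Definition symmetric_open_nbhd_id (G : TN -> Prop) (tau : (Gsub G -> Prop) -> Prop)
    (V : Gsub G -> Prop) : Prop :=
  tau V /\ (forall g : Gsub G, proj1_sig g = TNone -> V g) /\
  (forall g h : Gsub G, proj1_sig h = TNinv (proj1_sig g) -> V g -> V h).

Definition turbulent (G : TN -> Prop) (tau : (Gsub G -> Prop) -> Prop) : Prop :=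
  action_continuous G tau /\
  (forall x, dense TN_open (@orbit G x)) /\
  (forall x, meager TN_open (@orbit G x)) /\
  (forall (U : TN -> Prop) (V : Gsub G -> Prop) (x : TN),
     TN_open U -> symmetric_open_nbhd_id G tau V -> U x ->
     exists y, interior TN_open (closure TN_open (local_orbit x U V)) y).

(* Main.v *)
Require Import Defs.
From Stdlib Require Import Reals.
From Stdlib Require Import Reals Lra Psatz ProofIrrelevance FunctionalExtensionality Classical ClassicalEpsilon Cantor Arith Lia ZArith.
Open Scope R_scope.

Lemma sq_le (X Y : R) : 0 <= Y -> X*X <= Y*Y -> X <= Y.
Proof. intros. destruct (Rle_dec X Y); auto. exfalso. assert (Y < X) by lra. nra. Qed.

Lemma cs (u1 v1 u2 v2 p q : R) : 0 <= p -> 0 <= q -> p*p = u1*u1+v1*v1 -> q*q = u2*u2+v2*v2 ->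
  u1*u2+v1*v2 <= p*q.
Proof. intros. apply sq_le. nra.
 { replace ((p*q)*(p*q)) with ((p*p)*(q*q)) by ring. rewrite H1, H2.
   pose proof (Rle_0_sqr (u1*v2 - v1*u2)). unfold Rsqr in H3. nra. } Qed.

Definition ta (z:Tpt) := fst (proj1_sig z).
Definition tb (z:Tpt) := snd (proj1_sig z).
Lemma tnorm z : ta z * ta z + tb z * tb z = 1.
Proof. exact (proj2_sig z). Qed.
Lemma teq z w : ta z = ta w -> tb z = tb w -> z = w.
Proof. destruct z as [[a b] p], w as [[c d] q]; unfold ta, tb; simpl; intros; subst.
  f_equal; apply proof_irrelevance. Qed.
Lemma ta_mul z w : ta (tmul z w) = ta z * ta w - tb z * tb w. Proof. reflexivity. Qed.
Lemma tb_mul z w : tb (tmul z w) = ta z * tb w + tb z * ta w. Proof. reflexivity. Qed.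
Lemma ta_inv z : ta (tinv z) = ta z. Proof. reflexivity. Qed.
Lemma tb_inv z : tb (tinv z) = - tb z. Proof. reflexivity. Qed.
Lemma ta_one : ta tone = 1. Proof. reflexivity. Qed.
Lemma tb_one : tb tone = 0. Proof. reflexivity. Qed.
Ltac tsimp := repeat rewrite ?ta_mul, ?tb_mul, ?ta_inv, ?tb_inv, ?ta_one, ?tb_one.

Lemma tmul_comm x y : tmul x y = tmul y x.
Proof. apply teq; tsimp; ring. Qed.
Lemma tmul_assoc x y z : tmul x (tmul y z) = tmul (tmul x y) z.
Proof. apply teq; tsimp; ring. Qed.
Lemma tmul_one_l x : tmul tone x = x.
Proof. apply teq; tsimp; ring. Qed.
Lemma tmul_one_r x : tmul x tone = x.
Proof. apply teq; tsimp; ring. Qed.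
Lemma tmul_inv_r x : tmul x (tinv x) = tone.
Proof. pose proof (tnorm x). apply teq; tsimp; nra. Qed.
Lemma tmul_inv_l x : tmul (tinv x) x = tone.
Proof. rewrite tmul_comm; apply tmul_inv_r. Qed.
Lemma tinv_mul x y : tinv (tmul x y) = tmul (tinv x) (tinv y).
Proof. apply teq; tsimp; ring. Qed.
Lemma tinv_inv x : tinv (tinv x) = x.
Proof. apply teq; tsimp; ring. Qed.
Lemma tinv_one : tinv tone = tone.
Proof. apply teq; tsimp; ring. Qed.

Definition tsq x y := (ta x - ta y)*(ta x - ta y) + (tb x - tb y)*(tb x - tb y).
Lemma tdist_eq x y : tdist x y = sqrt (tsq x y).
Proof. unfold tdist, tsq, ta, tb. f_equal. ring. Qed.
Lemma tsq_pos x y : 0 <= tsq x y.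
Proof. unfold tsq; apply Rplus_le_le_0_compat; apply Rle_0_sqr. Qed.
Lemma tdist_pos x y : 0 <= tdist x y.
Proof. rewrite tdist_eq; apply sqrt_pos. Qed.
Lemma tdist_sq x y : tdist x y * tdist x y = tsq x y.
Proof. rewrite tdist_eq; apply sqrt_sqrt, tsq_pos. Qed.
Lemma tdist_refl x : tdist x x = 0.
Proof. rewrite tdist_eq; unfold tsq. replace (_ + _) with 0 by ring. apply sqrt_0. Qed.
Lemma tdist_sym x y : tdist x y = tdist y x.
Proof. rewrite !tdist_eq; unfold tsq; f_equal; ring. Qed.
Lemma tdist_tri x y z : tdist x z <= tdist x y + tdist y z.
Proof.
  pose proof (tdist_pos x y); pose proof (tdist_pos y z); pose proof (tdist_pos x z).
  apply sq_le. lra. rewrite tdist_sq.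
  pose proof (tdist_sq x y); pose proof (tdist_sq y z). unfold tsq in *.
  pose proof (cs (ta x - ta y) (tb x - tb y) (ta y - ta z) (tb y - tb z) (tdist x y) (tdist y z) H H0 H2 H3).
  replace ((ta x - ta z) * (ta x - ta z) + (tb x - tb z) * (tb x - tb z)) with
    (((ta x - ta y) * (ta x - ta y) + (tb x - tb y) * (tb x - tb y)) + ((ta y - ta z) * (ta y - ta z) + (tb y - tb z) * (tb y - tb z))
     + 2 * ((ta x - ta y) * (ta y - ta z) + (tb x - tb y) * (tb y - tb z))) by ring.
  rewrite <- H2, <- H3. nra. Qed.
Lemma tdist_abs_a x y : Rabs (ta x - ta y) <= tdist x y.
Proof. pose proof (tdist_pos x y). apply sq_le; auto. rewrite tdist_sq. unfold tsq.
  pose proof (Rle_0_sqr (ta x - ta y)); pose proof (Rle_0_sqr (tb x - tb y)); unfold Rsqr in *.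
  rewrite <- Rabs_mult, Rabs_right; lra. Qed.
Lemma tdist_abs_b x y : Rabs (tb x - tb y) <= tdist x y.
Proof. pose proof (tdist_pos x y). apply sq_le; auto. rewrite tdist_sq. unfold tsq.
  pose proof (Rle_0_sqr (ta x - ta y)); pose proof (Rle_0_sqr (tb x - tb y)); unfold Rsqr in *.
  rewrite <- Rabs_mult, Rabs_right; lra. Qed.
Lemma tdist_le_abs x y : tdist x y <= Rabs (ta x - ta y) + Rabs (tb x - tb y).
Proof. apply sq_le. pose proof (Rabs_pos (ta x - ta y)); pose proof (Rabs_pos (tb x - tb y)); lra.
  rewrite tdist_sq; unfold tsq.
  pose proof (Rabs_pos (ta x - ta y)); pose proof (Rabs_pos (tb x - tb y)).
  replace ((ta x - ta y) * (ta x - ta y)) with (Rabs (ta x - ta y) * Rabs (ta x - ta y)).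
  replace ((tb x - tb y) * (tb x - tb y)) with (Rabs (tb x - tb y) * Rabs (tb x - tb y)).
  nra.
  pose proof (Rle_0_sqr (tb x - tb y)); unfold Rsqr in *; rewrite <- Rabs_mult, Rabs_right; lra.
  pose proof (Rle_0_sqr (ta x - ta y)); unfold Rsqr in *; rewrite <- Rabs_mult, Rabs_right; lra. Qed.
Lemma tdist_mul_l z x y : tdist (tmul z x) (tmul z y) = tdist x y.
Proof. rewrite !tdist_eq; f_equal. unfold tsq. tsimp. pose proof (tnorm z).
  transitivity ((ta z * ta z + tb z * tb z) * ((ta x - ta y) * (ta x - ta y) + (tb x - tb y) * (tb x - tb y))).
  ring. rewrite H; ring. Qed.
Lemma tdist_mul_r z x y : tdist (tmul x z) (tmul y z) = tdist x y.
Proof. rewrite (tmul_comm x), (tmul_comm y); apply tdist_mul_l. Qed.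
Lemma tdist_inv x y : tdist (tinv x) (tinv y) = tdist x y.
Proof. rewrite !tdist_eq; f_equal. unfold tsq; tsimp; ring. Qed.
Lemma tdist_mul2 a b c d : tdist (tmul a b) (tmul c d) <= tdist a c + tdist b d.
Proof. eapply Rle_trans. apply (tdist_tri _ (tmul c b)). rewrite tdist_mul_r, tdist_mul_l. lra. Qed.
Lemma tdist_div_one x y : tdist (tmul x (tinv y)) tone = tdist x y.
Proof. rewrite <- (tmul_inv_r y). rewrite tdist_mul_r. reflexivity. Qed.

Lemma baire_basis {X} (O : (X -> Prop) -> Prop) (B : X -> nat -> X -> Prop)
 (H1 : forall U, O U -> forall x, U x -> exists k, forall y, B x k y -> U y)
 (H1' : forall U, (forall x, U x -> exists k, forall y, B x k y -> U y) -> O U)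
 (H2 : forall x k, B x k x)
 (H3 : forall x k y, B x k y -> exists k', forall z, B y k' z -> B x k z)
 (H4 : forall x k k' y, (k <= k')%nat -> B x k' y -> B x k y)
 (H5 : forall (s : nat -> X) (kk : nat -> nat), (forall j, (kk j < kk (S j))%nat) ->
         (forall j, B (s j) (kk j + 2)%nat (s (S j))) -> exists L, forall j, B (s j) (kk j) L) :
 forall U, O U -> (exists x, U x) -> ~ meager O U.
Proof.
  intros U OU [x0 Ux0] [N [HN HU]].
  assert (step : forall (j : nat) (p : X * nat), exists q : X * nat,
    B (fst p) (snd p + 2)%nat (fst q) /\ (snd p < snd q)%nat /\ forall z, B (fst q) (snd q) z -> ~ N j z).
  { intros j [x k]; simpl.
    assert (OW : O (B x (k+2)%nat)). { apply H1'. intros y Hy. destruct (H3 _ _ _ Hy) as [k' Hk']. eauto. }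
    assert (Hn : ~ forall y, B x (k+2)%nat y -> closure O (N j) y).
    { intros Hc. apply (HN j x). exists (B x (k+2)%nat). split; auto. }
    apply not_all_ex_not in Hn as [y Hy]. apply imply_to_and in Hy as [Wy Hy].
    apply not_all_ex_not in Hy as [Q Hy]. apply imply_to_and in Hy as [OQ Hy].
    apply imply_to_and in Hy as [Qy Hy].
    destruct (H1 Q OQ y Qy) as [k' Hk'].
    exists (y, (k' + k + 1)%nat); simpl. split; auto. split. lia.
    intros z Hz Nz. apply Hy. exists z. split; auto. apply Hk'. apply (H4 _ _ (k' + k + 1)%nat); auto; lia. }
  destruct (H1 U OU x0 Ux0) as [k0 Hk0].
  pose (f := fun j p => proj1_sig (constructive_indefinite_description _ (step j p))).
  assert (Hf : forall j p, B (fst p) (snd p + 2)%nat (fst (f j p)) /\ (snd p < snd (f j p))%nat /\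
      forall z, B (fst (f j p)) (snd (f j p)) z -> ~ N j z).
  { intros j p. exact (proj2_sig (constructive_indefinite_description _ (step j p))). }
  pose (sq := fix sq (n : nat) : X * nat := match n with 0%nat => (x0, k0) | S j => f j (sq j) end).
  destruct (H5 (fun n => fst (sq n)) (fun n => snd (sq n))) as [L HL].
  - intros j. simpl. apply Hf.
  - intros j. simpl. apply Hf.
  - assert (UL : U L) by (apply Hk0; exact (HL 0%nat)).
    destruct (HU L UL) as [j Nj]. pose proof (HL (S j)). simpl in H. apply (proj2 (proj2 (Hf j (sq j))) L H Nj).
Qed.



Lemma open_ext {X} (O : (X -> Prop) -> Prop) : is_topology O ->
  forall U V, (forall x, U x <-> V x) -> O U -> O V.
Proof. intros [H _]; exact H. Qed.
Lemma open_true {X} (O : (X -> Prop) -> Prop) : is_topology O -> O (fun _ => True).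
Proof. intros [_ [H _]]; exact H. Qed.
Lemma open_inter {X} (O : (X -> Prop) -> Prop) : is_topology O ->
  forall U V, O U -> O V -> O (fun x => U x /\ V x).
Proof. intros [_ [_ [H _]]]; exact H. Qed.
Lemma open_local {X} (O : (X -> Prop) -> Prop) : is_topology O -> forall P : X -> Prop,
  (forall x, P x -> exists Q, O Q /\ Q x /\ forall y, Q y -> P y) -> O P.
Proof. intros T P H. destruct T as [Hext [_ [_ Hun]]].
  apply (Hext (fun x => exists U, (O U /\ forall y, U y -> P y) /\ U x)).
  - intros x; split. intros [U [[_ HU] Ux]]; auto.
    intros Px. destruct (H x Px) as [Q [OQ [Qx HQ]]]. exists Q; auto.
  - apply Hun. intros U [OU _]; auto. Qed.

Lemma closure_incl {X} (O : (X -> Prop) -> Prop) (A : X -> Prop) x : A x -> closure O A x.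
Proof. intros Ax U OU Ux; exists x; auto. Qed.
Lemma closure_closure {X} (O : (X -> Prop) -> Prop) (A : X -> Prop) x :
  closure O (closure O A) x -> closure O A x.
Proof. intros H U OU Ux. destruct (H U OU Ux) as [y [Uy Hy]]. apply (Hy U OU Uy). Qed.
Lemma closure_mono {X} (O : (X -> Prop) -> Prop) (A B : X -> Prop) :
  (forall x, A x -> B x) -> forall x, closure O A x -> closure O B x.
Proof. intros HAB x H U OU Ux. destruct (H U OU Ux) as [y [Uy Ay]]; eauto. Qed.

Lemma nowhere_dense_sub {X} (O : (X -> Prop) -> Prop) (A B : X -> Prop) :
  (forall x, A x -> B x) -> nowhere_dense O B -> nowhere_dense O A.
Proof. intros HAB HB x [U [OU [Ux HU]]]. apply (HB x). exists U; repeat split; auto.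
  intros y Uy. apply (closure_mono O A B HAB), HU, Uy. Qed.

Lemma meager_sub {X} (O : (X -> Prop) -> Prop) (A B : X -> Prop) :
  (forall x, A x -> B x) -> meager O B -> meager O A.
Proof. intros HAB [N [HN HB]]. exists N; split; auto. Qed.

Lemma nowhere_dense_empty {X} (O : (X -> Prop) -> Prop) : is_topology O ->
  nowhere_dense O (fun _ => False).
Proof. intros T x [U [OU [Ux HU]]]. destruct (HU x Ux (fun _ => True) (open_true O T) I) as [y [_ []]]. Qed.

Lemma meager_empty {X} (O : (X -> Prop) -> Prop) : is_topology O -> meager O (fun _ => False).
Proof. intros T. exists (fun _ _ => False). split. intros; apply nowhere_dense_empty; auto.
  intros x []. Qed.

Lemma choice_nat {A : Type} (P : nat -> A -> Prop) : (forall n, exists a, P n a) ->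
  exists f : nat -> A, forall n, P n (f n).
Proof. intros H. exists (fun n => proj1_sig (constructive_indefinite_description _ (H n))).
  intros n. exact (proj2_sig (constructive_indefinite_description _ (H n))). Qed.

Lemma meager_union {X} (O : (X -> Prop) -> Prop) (A : nat -> X -> Prop) :
  (forall n, meager O (A n)) -> meager O (fun x => exists n, A n x).
Proof. intros H. destruct (choice_nat (fun n N => (forall k, nowhere_dense O (N k)) /\
     forall x, A n x -> exists k, N k x) H) as [N HN].
  exists (fun k => let p := of_nat k in N (fst p) (snd p)). split.
  - intros k. apply HN.
  - intros x [n Hn]. destruct (proj2 (HN n) x Hn) as [k Hk]. exists (to_nat (n, k)).
    rewrite cancel_of_to. exact Hk. Qed.

Lemma meager_union2 {X} (O : (X -> Prop) -> Prop) (A B : X -> Prop) :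
  meager O A -> meager O B -> meager O (fun x => A x \/ B x).
Proof. intros HA HB. apply (meager_sub O _ (fun x => exists n, (if Nat.eqb n 0 then A else B) x)).
  intros x [Ax|Bx]. exists 0%nat; auto. exists 1%nat; auto.
  apply meager_union. intros [|n]; auto. Qed.

Lemma boundary_nowhere_dense {X} (O : (X -> Prop) -> Prop) : is_topology O -> forall U, O U ->
  nowhere_dense O (fun x => closure O U x /\ ~ U x).
Proof. intros T U OU x [W [OW [Wx HW]]].
  assert (Hx : closure O U x).
  { apply closure_closure. apply (closure_mono O _ _ (fun y (H : closure O U y /\ ~ U y) => proj1 H)). apply HW, Wx. }
  destruct (Hx W OW Wx) as [y [Wy Uy]].
  destruct (HW y Wy (fun z => W z /\ U z) (open_inter O T W U OW OU) (conj Wy Uy)) as [z [[_ Uz] [_ nUz]]].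
  auto. Qed.

Definition BP {X} (O : (X -> Prop) -> Prop) (A : X -> Prop) : Prop :=
  exists U, O U /\ meager O (fun x => ~ (A x <-> U x)).

Lemma BP_sigma {X} (O : (X -> Prop) -> Prop) : is_topology O -> sigma_algebra (BP O).
Proof. intros T. split; [|split; [|split]].
  - intros A B HAB [U [OU HU]]. exists U; split; auto. refine (meager_sub O _ _ _ HU).
    intros x H Hc; apply H. rewrite <- HAB; auto.
  - exists (fun _ => True); split. apply open_true; auto.
    apply (meager_sub O _ (fun _ => False)). intros x H; apply H; tauto. apply meager_empty; auto.
  - intros A [U [OU HU]]. exists (fun x => ~ closure O U x). split.
    + apply open_local; auto. intros x Hx. apply not_all_ex_not in Hx as [Q Hx].
      apply imply_to_and in Hx as [OQ Hx]. apply imply_to_and in Hx as [Qx Hx].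
      exists Q; split; [auto|split; [auto|]]. intros y Qy Hy. apply Hx. exact (Hy Q OQ Qy).
    + apply (meager_sub O _ (fun x => ~ (A x <-> U x) \/ (closure O U x /\ ~ U x))).
      * intros x H. destruct (classic (A x <-> U x)) as [Hq|Hq]; [right|left; auto].
        destruct (classic (U x)) as [Ux|Ux].
        -- exfalso. apply H. split; intros h; exfalso. apply h, Hq, Ux. apply h, closure_incl, Ux.
        -- split; auto. apply NNPP. intros Hc. apply H. split; intros; auto. intros Ax. apply Ux, Hq, Ax.
      * apply meager_union2; auto. exists (fun _ => fun x => closure O U x /\ ~ U x). split.
        intros; apply boundary_nowhere_dense; auto. intros x Hx; exists 0%nat; auto.
  - intros A HA. destruct (choice_nat (fun n U => O U /\ meager O (fun x => ~ (A n x <-> U x))) HA) as [U HU].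
    exists (fun x => exists n, U n x). split.
    + destruct T as [Hext [_ [_ Hun]]].
      apply (Hext (fun x => exists W, (exists n, forall y, W y <-> U n y) /\ W x)).
      * intros x; split. intros [W [[n Hn] Wx]]. exists n; apply Hn; auto.
        intros [n Hn]. exists (U n). split; auto. exists n; tauto.
      * apply Hun. intros W [n Hn]. apply (Hext (U n)). intros y; rewrite Hn; tauto. apply HU.
    + apply (meager_sub O _ (fun x => exists n, ~ (A n x <-> U n x))).
      * intros x H. apply NNPP; intros Hc. apply H. split.
        intros [n Hn]. exists n. apply NNPP; intros Hd; apply Hc; exists n; intros He; apply Hd, He, Hn.
        intros [n Hn]. exists n. apply NNPP; intros Hd; apply Hc; exists n; intros He; apply Hd, He, Hn.
      * apply meager_union. intros n; apply HU. Qed.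

Lemma borel_BP {X} (O : (X -> Prop) -> Prop) : is_topology O -> forall A, borel O A -> BP O A.
Proof. intros T A HA. apply HA. apply BP_sigma; auto. intros U OU. exists U; split; auto.
  apply (meager_sub O _ (fun _ => False)). intros x H; apply H; tauto. apply meager_empty; auto. Qed.

Lemma borel_open {X} (O : (X -> Prop) -> Prop) U : O U -> borel O U.
Proof. intros OU S _ HS; auto. Qed.
Lemma borel_ext {X} (O : (X -> Prop) -> Prop) A B : (forall x, A x <-> B x) -> borel O A -> borel O B.
Proof. intros H HA S HS HO. apply (proj1 HS A B H). apply HA; auto. Qed.
Lemma borel_compl {X} (O : (X -> Prop) -> Prop) A : borel O A -> borel O (fun x => ~ A x).
Proof. intros HA S HS HO. apply (proj1 (proj2 (proj2 HS))). apply HA; auto. Qed.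
Lemma borel_union {X} (O : (X -> Prop) -> Prop) (A : nat -> X -> Prop) : (forall n, borel O (A n)) ->
  borel O (fun x => exists n, A n x).
Proof. intros HA S HS HO. apply (proj2 (proj2 (proj2 HS))). intros n; apply HA; auto. Qed.
Lemma borel_inter {X} (O : (X -> Prop) -> Prop) A B : borel O A -> borel O B -> borel O (fun x => A x /\ B x).
Proof. intros HA HB.
  apply (borel_ext O (fun x => ~ exists n, (if Nat.eqb n 0 then fun y => ~ A y else fun y => ~ B y) x)).
  - intros x; split. intros H; split; apply NNPP; intros Hc; apply H. exists 0%nat; auto. exists 1%nat; auto.
    intros [Ax Bx] [[|n] Hn]; auto.
  - apply borel_compl, borel_union. intros [|n]; apply borel_compl; auto. Qed.

Record ATG := mkATG {
 car : Type; atop : (car -> Prop) -> Prop; amul : car -> car -> car; ainv : car -> car; aone : car;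
 atop_top : is_topology atop;
 amulC : forall x y, amul x y = amul y x;
 amulA : forall x y z, amul x (amul y z) = amul (amul x y) z;
 amul1 : forall x, amul aone x = x;
 amulV : forall x, amul x (ainv x) = aone;
 atransl : forall a W, atop W -> atop (fun x => W (amul a x));
 abaire : forall U, atop U -> (exists x, U x) -> ~ meager atop U }.

Lemma acancel1 (A : ATG) a y : amul A (ainv A a) (amul A a y) = y.
Proof. rewrite amulA, (amulC A (ainv A a)), amulV, amul1; auto. Qed.
Lemma acancel2 (A : ATG) a y : amul A a (amul A (ainv A a) y) = y.
Proof. rewrite amulA, amulV, amul1; auto. Qed.
Lemma amul1r (A : ATG) x : amul A x (aone A) = x.
Proof. rewrite amulC, amul1; auto. Qed.
Lemma aconj (A : ATG) b w : amul A (amul A b w) (ainv A b) = w.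
Proof. rewrite (amulC A b w), <- amulA, amulV, amul1r; auto. Qed.

Lemma transl_nowhere_dense (A : ATG) (N : car A -> Prop) a :
  nowhere_dense (atop A) N -> nowhere_dense (atop A) (fun y => N (amul A a y)).
Proof. intros HN x [W [OW [Wx HW]]]. apply (HN (amul A a x)).
  exists (fun z => W (amul A (ainv A a) z)). split. apply atransl; auto. split. rewrite acancel1; auto.
  intros z Wz Q OQ Qz. destruct (HW _ Wz (fun y => Q (amul A a y)) (atransl A a Q OQ)) as [y [Qy Ny]].
  rewrite acancel2; auto. exists (amul A a y); auto. Qed.

Lemma transl_meager (A : ATG) (M : car A -> Prop) a :
  meager (atop A) M -> meager (atop A) (fun y => M (amul A a y)).
Proof. intros [N [HN HM]]. exists (fun n y => N n (amul A a y)). split.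
  intros n; apply transl_nowhere_dense; auto. intros x Hx; apply HM, Hx. Qed.

Lemma pettis (A : ATG) (S : car A -> Prop) : BP (atop A) S -> ~ meager (atop A) S ->
  exists W, atop A W /\ W (aone A) /\ forall w, W w -> exists a b, S a /\ S b /\ w = amul A a (ainv A b).
Proof. intros [U [OU HM]] HS.
  assert (Hu : exists u, U u).
  { apply NNPP; intros Hc. apply HS. refine (meager_sub _ _ _ _ HM). intros x Sx Hx.
    apply Hc. exists x. apply Hx, Sx. }
  destruct Hu as [u Uu].
  exists (fun w => U (amul A u w)). split. apply atransl; auto. split. rewrite amul1r; auto.
  intros w Uw. apply NNPP; intros Hc.
  apply (abaire A (fun y => U y /\ U (amul A (ainv A w) y))).
  - apply open_inter. apply atop_top. auto. apply atransl; auto.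
  - exists (amul A u w). split; auto. rewrite (amulC A u w), acancel1; auto.
  - apply (meager_sub _ _ (fun y => (fun x => ~ (S x <-> U x)) y \/ (fun x => ~ (S x <-> U x)) (amul A (ainv A w) y))).
    + intros y [Uy Uy']. destruct (classic (S y)) as [Sy|Sy].
      * right. intros Hq. apply Hc. exists y, (amul A (ainv A w) y). split; auto. split. apply Hq; auto.
        set (b := amul A (ainv A w) y). assert (y = amul A b w).
        { unfold b. rewrite (amulC A _ w). rewrite acancel2. auto. }
        rewrite H. rewrite aconj; auto.
      * left. intros Hq; apply Sy, Hq, Uy.
    + apply meager_union2; auto. apply (transl_meager A (fun x => ~ (S x <-> U x))); auto. Qed.

Definition p2 (k : nat) : R := (/2) ^ k.
Lemma p2_pos k : 0 < p2 k.
Proof. unfold p2; apply pow_lt; lra. Qed.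
Lemma p2_S k : p2 (S k) = p2 k / 2.
Proof. unfold p2; simpl; lra. Qed.
Lemma p2_mono k k' : (k <= k')%nat -> p2 k' <= p2 k.
Proof. induction 1. lra. rewrite p2_S. pose proof (p2_pos m); lra. Qed.
Lemma p2_small e : 0 < e -> exists k, p2 k < e.
Proof. intros He. destruct (pow_lt_1_zero (/2)) with (y := e) as [N HN]; auto.
  rewrite Rabs_right; lra. exists N. specialize (HN N (le_n _)). unfold p2.
  rewrite Rabs_right in HN; auto. apply Rle_ge, pow_le; lra. Qed.
Lemma p2_le1 k : p2 k <= 1.
Proof. replace 1 with (p2 0) by reflexivity. apply p2_mono; lia. Qed.

Lemma margin (f : nat -> R) (c : R) K : (forall i, (i <= K)%nat -> f i < c) ->
  exists r, 0 < r /\ forall i, (i <= K)%nat -> f i + r < c.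
Proof. induction K; intros H.
  - exists ((c - f 0%nat)/2). specialize (H 0%nat (le_n _)). split. lra.
    intros i Hi. assert (i = 0%nat) by lia. subst; lra.
  - destruct IHK as [r [Hr Hi]]. intros; apply H; lia.
    pose (r' := Rmin r ((c - f (S K))/2)). specialize (H (S K) (le_n _)).
    exists r'. split. unfold r'; apply Rmin_glb_lt; lra.
    intros i Hil. destruct (Nat.eq_dec i (S K)). subst. unfold r'.
    pose proof (Rmin_r r ((c - f (S K))/2)). lra.
    pose proof (Rmin_l r ((c - f (S K))/2)). specialize (Hi i ltac:(lia)). unfold r'; lra. Qed.

Lemma TNeq (x y : TN) : (forall i, x i = y i) -> x = y.
Proof. intros; apply functional_extensionality; auto. Qed.
Lemma TNmul_comm x y : TNmul x y = TNmul y x.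
Proof. apply TNeq; intros; apply tmul_comm. Qed.
Lemma TNmul_assoc x y z : TNmul x (TNmul y z) = TNmul (TNmul x y) z.
Proof. apply TNeq; intros; apply tmul_assoc. Qed.
Lemma TNmul_one x : TNmul TNone x = x.
Proof. apply TNeq; intros; apply tmul_one_l. Qed.
Lemma TNmul_inv x : TNmul x (TNinv x) = TNone.
Proof. apply TNeq; intros; apply tmul_inv_r. Qed.

Definition cyl (x : TN) (k : nat) (e : R) (y : TN) : Prop :=
  forall i, (i <= k)%nat -> tdist (x i) (y i) < e.

Lemma cyl_open x k e : TN_open (cyl x k e).
Proof. intros y Hy. destruct (margin (fun i => tdist (x i) (y i)) e k Hy) as [r [Hr Hm]].
  exists k, r. split; auto. intros z Hz i Hi. eapply Rle_lt_trans. apply (tdist_tri _ (y i)).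
  specialize (Hm i Hi); specialize (Hz i Hi); simpl in Hm; lra. Qed.

Lemma TN_top : is_topology TN_open.
Proof. split; [|split; [|split]].
  - intros U V HUV HU x Vx. destruct (HU x (proj2 (HUV x) Vx)) as [n [e [He H]]].
    exists n, e; split; auto. intros y Hy; apply HUV; auto.
  - intros x _; exists 0%nat, 1; split; auto; lra.
  - intros U V HU HV x [Ux Vx]. destruct (HU x Ux) as [n [e [He H]]]. destruct (HV x Vx) as [n' [e' [He' H']]].
    exists (max n n'), (Rmin e e'). split. apply Rmin_glb_lt; auto.
    intros y Hy; split; [apply H|apply H']; intros i Hi; specialize (Hy i ltac:(lia));
     [pose proof (Rmin_l e e') | pose proof (Rmin_r e e')]; lra.
  - intros F HF x [U [FU Ux]]. destruct (HF U FU x Ux) as [n [e [He H]]]. exists n, e; split; auto.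
    intros y Hy; exists U; auto. Qed.

Definition TNB (x : TN) (k : nat) (y : TN) : Prop := cyl x k (p2 k) y.

Lemma TN_H1 U : TN_open U -> forall x, U x -> exists k, forall y, TNB x k y -> U y.
Proof. intros HU x Ux. destruct (HU x Ux) as [n [e [He H]]]. destruct (p2_small e He) as [k0 Hk0].
  exists (max n k0). intros y Hy. apply H. intros i Hi. specialize (Hy i ltac:(lia)).
  pose proof (p2_mono k0 (max n k0) ltac:(lia)). lra. Qed.
Lemma TN_H1' U : (forall x, U x -> exists k, forall y, TNB x k y -> U y) -> TN_open U.
Proof. intros H x Ux. destruct (H x Ux) as [k Hk]. exists k, (p2 k). split. apply p2_pos. exact Hk. Qed.
Lemma TN_H2 x k : TNB x k x.
Proof. intros i _. rewrite tdist_refl. apply p2_pos. Qed.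
Lemma TN_H3 x k y : TNB x k y -> exists k', forall z, TNB y k' z -> TNB x k z.
Proof. intros H. destruct (cyl_open x k (p2 k) y H) as [n [e [He Hz]]].
  destruct (p2_small e He) as [k0 Hk0]. exists (max n k0). intros z Hyz. apply Hz.
  intros i Hi. specialize (Hyz i ltac:(lia)). pose proof (p2_mono k0 (max n k0) ltac:(lia)). lra. Qed.
Lemma TN_H4 x k k' y : (k <= k')%nat -> TNB x k' y -> TNB x k y.
Proof. intros Hk H i Hi. specialize (H i ltac:(lia)). pose proof (p2_mono k k' Hk). lra. Qed.

Lemma kk_mono (kk : nat -> nat) : (forall j, (kk j < kk (S j))%nat) -> forall j j', (j <= j')%nat -> (kk j <= kk j')%nat.
Proof. intros H j j' Hj. induction Hj. lia. specialize (H m); lia. Qed.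
Lemma kk_ge (kk : nat -> nat) : (forall j, (kk j < kk (S j))%nat) -> forall j, (j <= kk j)%nat.
Proof. intros H j. induction j. lia. specialize (H j); lia. Qed.

Lemma TN_H5 (s : nat -> TN) (kk : nat -> nat) : (forall j, (kk j < kk (S j))%nat) ->
  (forall j, TNB (s j) (kk j + 2)%nat (s (S j))) -> exists L, forall j, TNB (s j) (kk j) L.
Proof. intros Hk Hs.
  assert (Inv : forall j j' i, (j <= j')%nat -> (i <= kk j)%nat ->
     tdist (s j i) (s j' i) + p2 (kk j' + 1) <= p2 (kk j + 1)).
  { intros j j' i Hj Hi. induction Hj.
    - rewrite tdist_refl; lra.
    - pose proof (kk_mono kk Hk j m Hj). pose proof (Hk m).
      assert (tdist (s m i) (s (S m) i) < p2 (kk m + 2)) by (apply Hs; lia).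
      pose proof (tdist_tri (s j i) (s m i) (s (S m) i)).
      pose proof (p2_mono (kk m + 2) (kk (S m) + 1) ltac:(lia)).
      replace (p2 (kk m + 2)) with (p2 (kk m + 1) / 2) in * by (replace (kk m + 2)%nat with (S (kk m + 1)) by lia; symmetry; apply p2_S).
      lra. }
  assert (Cau : forall i (f : Tpt -> R), (forall x y, Rabs (f x - f y) <= tdist x y) ->
      Cauchy_crit (fun n => f (s n i))).
  { intros i f Hf e He. destruct (p2_small e He) as [k0 Hk0]. exists (max i k0). intros n m Hn Hm.
    unfold R_dist. set (N := max i k0).
    assert (i <= kk N)%nat by (pose proof (kk_ge kk Hk N); unfold N in *; lia).
    pose proof (Inv N n i ltac:(lia) H) as I1. pose proof (Inv N m i ltac:(lia) H) as I2.
    pose proof (p2_pos (kk n + 1)) as P1; pose proof (p2_pos (kk m + 1)) as P2.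
    pose proof (tdist_tri (s n i) (s N i) (s m i)) as T1. rewrite (tdist_sym (s n i) (s N i)) in T1.
    pose proof (Hf (s n i) (s m i)) as F1.
    assert (E1 : p2 (kk N + 1) = p2 (kk N) / 2) by (rewrite Nat.add_1_r; apply p2_S).
    pose proof (p2_mono k0 (kk N) ltac:(pose proof (kk_ge kk Hk N); unfold N in *; lia)) as M1. lra. }
  assert (Lim : forall i, {p : Tpt | Un_cv (fun n => ta (s n i)) (ta p) /\ Un_cv (fun n => tb (s n i)) (tb p)}).
  { intros i. destruct (R_complete _ (Cau i ta (fun x y => tdist_abs_a x y))) as [la Ha].
    destruct (R_complete _ (Cau i tb (fun x y => tdist_abs_b x y))) as [lb Hb].
    assert (Hn : fst (la, lb) * fst (la, lb) + snd (la, lb) * snd (la, lb) = 1).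
    { simpl. apply (UL_sequence (fun n => ta (s n i) * ta (s n i) + tb (s n i) * tb (s n i))).
      apply CV_plus; apply CV_mult; auto.
      intros e He; exists 0%nat; intros n _. rewrite tnorm. unfold R_dist; rewrite Rminus_diag, Rabs_R0; auto. }
    exists (exist _ (la, lb) Hn). unfold ta, tb; simpl; auto. }
  exists (fun i => proj1_sig (Lim i)). intros j i Hi. destruct (Lim i) as [p [Ha Hb]]; simpl.
  set (r := p2 (kk j + 1)). assert (Hr : 0 < r) by apply p2_pos.
  destruct (Ha (r/2) ltac:(lra)) as [Na HNa]. destruct (Hb (r/2) ltac:(lra)) as [Nb HNb].
  set (n := max j (max Na Nb)).
  specialize (HNa n ltac:(unfold n; lia)). specialize (HNb n ltac:(unfold n; lia)). unfold R_dist in *.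
  pose proof (Inv j n i ltac:(unfold n; lia) Hi). pose proof (p2_pos (kk n + 1)).
  pose proof (tdist_le_abs (s n i) p). pose proof (tdist_tri (s j i) (s n i) p).
  assert (p2 (kk j + 1) = p2 (kk j) / 2) by (rewrite Nat.add_1_r; apply p2_S).
  unfold r in *. lra. Qed.

Lemma TN_transl a W : TN_open W -> TN_open (fun x => W (TNmul a x)).
Proof. intros HW x Wx. destruct (HW _ Wx) as [n [e [He H]]]. exists n, e; split; auto.
  intros y Hy. apply H. intros i Hi. unfold TNmul. rewrite tdist_mul_l. auto. Qed.

Lemma TN_baire U : TN_open U -> (exists x, U x) -> ~ meager TN_open U.
Proof. apply (baire_basis TN_open TNB TN_H1 TN_H1' TN_H2 TN_H3 TN_H4 TN_H5). Qed.

Definition TNatg : ATG := mkATG TN TN_open TNmul TNinv TNone TN_top TNmul_comm TNmul_assoc TNmul_one TNmul_inv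
  TN_transl TN_baire.

Lemma metric_baire {X} (O : (X -> Prop) -> Prop) (d : X -> X -> R) :
  metric d -> complete_metric d -> (forall U, O U <-> metric_open d U) ->
  forall U, O U -> (exists x, U x) -> ~ meager O U.
Proof. intros [Dpos [Dzero [Dsym Dtri]]] Dc HO.
  apply (baire_basis O (fun x k y => d x y < p2 k)).
  - intros U OU x Ux. destruct (proj1 (HO U) OU x Ux) as [e [He H]]. destruct (p2_small e He) as [k Hk].
    exists k. intros y Hy; apply H; lra.
  - intros U H. apply HO. intros x Ux. destruct (H x Ux) as [k Hk]. exists (p2 k); split; auto. apply p2_pos.
  - intros x k. replace (d x x) with 0 by (symmetry; apply Dzero; auto). apply p2_pos.
  - intros x k y Hxy. destruct (p2_small (p2 k - d x y) ltac:(lra)) as [k' Hk']. exists k'. intros z Hz.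
    pose proof (Dtri x y z). lra.
  - intros x k k' y Hk H. pose proof (p2_mono k k' Hk). lra.
  - intros s kk Hk Hs.
    assert (Inv : forall j j', (j <= j')%nat -> d (s j) (s j') + p2 (kk j' + 1) <= p2 (kk j + 1)).
    { intros j j' Hj. induction Hj.
      - replace (d (s j) (s j)) with 0 by (symmetry; apply Dzero; auto). lra.
      - pose proof (Hk m). pose proof (Hs m) as H1.
        pose proof (Dtri (s j) (s m) (s (S m))).
        pose proof (p2_mono (kk m + 2) (kk (S m) + 1) ltac:(lia)).
        replace (p2 (kk m + 2)) with (p2 (kk m + 1) / 2) in * by (replace (kk m + 2)%nat with (S (kk m + 1)) by lia; symmetry; apply p2_S).
        lra. }
    destruct (Dc s) as [L HL].
    + intros e He. destruct (p2_small e He) as [N HN]. exists N. intros m n Hm Hn.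
      pose proof (Inv N m Hm) as I1. pose proof (Inv N n Hn) as I2.
      pose proof (p2_pos (kk n + 1)); pose proof (p2_pos (kk m + 1)).
      pose proof (Dtri (s m) (s N) (s n)) as T1. rewrite (Dsym (s m) (s N)) in T1.
      assert (E1 : p2 (kk N + 1) = p2 (kk N) / 2) by (rewrite Nat.add_1_r; apply p2_S).
      pose proof (p2_mono N (kk N) (kk_ge kk Hk N)). lra.
    + exists L. intros j. set (r := p2 (kk j + 1)). assert (0 < r) by apply p2_pos.
      destruct (HL r H) as [N HN]. set (n := max j N). specialize (HN n ltac:(unfold n; lia)).
      pose proof (Inv j n ltac:(unfold n; lia)). pose proof (p2_pos (kk n + 1)).
      pose proof (Dtri (s j) (s n) L).
      assert (p2 (kk j + 1) = p2 (kk j) / 2) by (rewrite Nat.add_1_r; apply p2_S).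
      unfold r in *; lra. Qed.

Lemma TNinv_inv x : TNinv (TNinv x) = x.
Proof. apply TNeq; intros; apply tinv_inv. Qed.
Lemma TNmul_one_r x : TNmul x TNone = x.
Proof. apply TNeq; intros; apply tmul_one_r. Qed.
Lemma TNinv_one : TNinv TNone = TNone.
Proof. apply TNeq; intros; apply tinv_one. Qed.

Definition gmul (G : TN -> Prop) (HG : subgroup G) (g h : Gsub G) : Gsub G :=
  exist _ (TNmul (proj1_sig g) (proj1_sig h)) (proj1 (proj2 HG) _ _ (proj2_sig g) (proj2_sig h)).
Definition ginv (G : TN -> Prop) (HG : subgroup G) (g : Gsub G) : Gsub G :=
  exist _ (TNinv (proj1_sig g)) (proj2 (proj2 HG) _ (proj2_sig g)).
Definition gone (G : TN -> Prop) (HG : subgroup G) : Gsub G := exist _ TNone (proj1 HG).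

Lemma geq (G : TN -> Prop) (g h : Gsub G) : proj1_sig g = proj1_sig h -> g = h.
Proof. destruct g as [x p], h as [y q]; simpl; intros; subst; f_equal; apply proof_irrelevance. Qed.

Lemma g_inv_open G HG tau : is_topology tau -> group_topology G tau ->
  forall W, tau W -> tau (fun x => W (ginv G HG x)).
Proof. intros Tt GT W OW. apply open_local; auto. intros x Wx.
  destruct (GT W (gone G HG) x (ginv G HG x) OW) as [U [V [OU [OV [Uo [Vx H]]]]]]; auto.
  simpl. rewrite TNmul_one; auto.
  exists V. repeat split; auto. intros y Vy. apply (H (gone G HG) y); auto. simpl. rewrite TNmul_one; auto. Qed.

Lemma g_mul_open G HG tau : is_topology tau -> group_topology G tau ->
  forall a W, tau W -> tau (fun x => W (gmul G HG a x)).
Proof. intros Tt GT a W OW. apply open_local; auto. intros x Wx.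
  destruct (GT W a (ginv G HG x) (gmul G HG a x) OW) as [U [V [OU [OV [Ua [Vx H]]]]]]; auto.
  simpl. rewrite TNinv_inv; auto.
  exists (fun y => V (ginv G HG y)). split. apply g_inv_open; auto. split; auto.
  intros y Vy. apply (H a (ginv G HG y)); auto. simpl. rewrite TNinv_inv; auto. Qed.

Lemma gmul_comm G HG x y : gmul G HG x y = gmul G HG y x.
Proof. apply geq; apply TNmul_comm. Qed.
Lemma gmul_assoc G HG x y z : gmul G HG x (gmul G HG y z) = gmul G HG (gmul G HG x y) z.
Proof. apply geq; apply TNmul_assoc. Qed.
Lemma gmul_one G HG x : gmul G HG (gone G HG) x = x.
Proof. apply geq; apply TNmul_one. Qed.
Lemma gmul_inv G HG x : gmul G HG x (ginv G HG x) = gone G HG.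
Proof. apply geq; apply TNmul_inv. Qed.

Definition Gatg G HG tau (Tt : is_topology tau) (GT : group_topology G tau)
  (Hb : forall U, tau U -> (exists x, U x) -> ~ meager tau U) : ATG :=
  mkATG (Gsub G) tau (gmul G HG) (ginv G HG) (gone G HG) Tt (gmul_comm G HG) (gmul_assoc G HG)
   (gmul_one G HG) (gmul_inv G HG) (g_mul_open G HG tau Tt GT) Hb.

Fixpoint dec (n : nat) (i : nat) : nat :=
  match i with 0%nat => fst (of_nat n) | S i' => dec (snd (of_nat n)) i' end.
Lemma dec_surj m : forall f : nat -> nat, exists n, forall i, (i <= m)%nat -> dec n i = f i.
Proof. induction m; intros f.
  - exists (to_nat (f 0%nat, 0%nat)). intros i Hi. assert (i = 0%nat) by lia; subst. cbn [dec].
    rewrite cancel_of_to; auto.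
  - destruct (IHm (fun i => f (S i))) as [n' Hn']. exists (to_nat (f 0%nat, n')).
    intros [|i] Hi; cbn [dec]; rewrite cancel_of_to; cbn [fst snd]; auto. apply Hn'; lia. Qed.

Definition cen (r : R) (j : nat) : R := -2 + INR j * r - r / 2.
Lemma cen_cover r a : 0 < r -> -1 <= a -> exists j, Rabs (a - cen r j) < r.
Proof. intros Hr Ha. destruct (archimed ((a+2)/r)) as [H1 H2].
  assert (Hp : (0 < up ((a+2)/r))%Z).
  { apply lt_IZR. assert (0 < (a+2)/r) by (apply Rdiv_lt_0_compat; lra). lra. }
  exists (Z.to_nat (up ((a+2)/r))). unfold cen. rewrite INR_IZR_INZ, Z2Nat.id by lia.
  set (u := IZR (up ((a+2)/r))) in *.
  assert (E : (a + 2) / r * r = a + 2) by (field; lra).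
  assert (u * r > a + 2) by (rewrite <- E; apply Rmult_gt_compat_r; lra).
  assert (u * r - (a+2) <= r) by (rewrite <- E; replace (u * r - (a+2)/r*r) with ((u - (a+2)/r) * r) by ring;
    pose proof (Rmult_le_compat_r r _ _ (Rlt_le _ _ Hr) H2); lra).
  apply Rabs_def1; lra. Qed.

Lemma ta_bound z : -1 <= ta z. Proof. pose proof (tnorm z). nra. Qed.
Lemma tb_bound z : -1 <= tb z. Proof. pose proof (tnorm z). nra. Qed.

Definition box (m : nat) (r : R) (k : nat) (y : TN) : Prop :=
  forall i, (i <= m)%nat -> Rabs (ta (y i) - cen r (dec k (2*i))) < r /\ Rabs (tb (y i) - cen r (dec k (2*i+1))) < r.

Lemma box_open m r k : TN_open (box m r k).
Proof. intros y Hy.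
  destruct (margin (fun i => Rmax (Rabs (ta (y i) - cen r (dec k (2*i)))) (Rabs (tb (y i) - cen r (dec k (2*i+1))))) r m)
    as [e [He Hm]].
  { intros i Hi. apply Rmax_lub_lt; apply Hy; auto. }
  exists m, e. split; auto. intros z Hz i Hi. specialize (Hm i Hi); specialize (Hz i Hi). cbv beta in Hm.
  pose proof (Rmax_l (Rabs (ta (y i) - cen r (dec k (2*i)))) (Rabs (tb (y i) - cen r (dec k (2*i+1))))).
  pose proof (Rmax_r (Rabs (ta (y i) - cen r (dec k (2*i)))) (Rabs (tb (y i) - cen r (dec k (2*i+1))))).
  pose proof (tdist_abs_a (y i) (z i)); pose proof (tdist_abs_b (y i) (z i)).
  pose proof (Rabs_triang (ta (z i) - ta (y i)) (ta (y i) - cen r (dec k (2*i)))).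
  pose proof (Rabs_triang (tb (z i) - tb (y i)) (tb (y i) - cen r (dec k (2*i+1)))).
  rewrite Rabs_minus_sym in H1, H2.
  replace (ta (z i) - ta (y i) + (ta (y i) - cen r (dec k (2 * i)))) with (ta (z i) - cen r (dec k (2 * i))) in H3 by ring.
  replace (tb (z i) - tb (y i) + (tb (y i) - cen r (dec k (2 * i + 1)))) with (tb (z i) - cen r (dec k (2 * i + 1))) in H4 by ring.
  split; lra. Qed.

Lemma box_cover m r y : 0 < r -> exists k, box m r k y.
Proof. intros Hr.
  assert (Hf : forall j, exists c, Rabs ((if Nat.even j then ta (y (Nat.div2 j)) else tb (y (Nat.div2 j))) - cen r c) < r).
  { intros j. destruct (Nat.even j); apply cen_cover; auto; [apply ta_bound|apply tb_bound]. }
  destruct (choice_nat _ Hf) as [f Hf'].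
  destruct (dec_surj (2*m+1) f) as [k Hk]. exists k. intros i Hi. rewrite !Hk by lia.
  pose proof (Hf' (2*i)%nat); pose proof (Hf' (2*i+1)%nat).
  replace (Nat.even (2*i)) with true in H by (symmetry; apply Nat.even_spec; exists i; lia).
  replace (Nat.even (2*i+1)) with false in H0 by (symmetry; apply Bool.not_true_iff_false; rewrite Nat.even_spec;
    intros [q Hq]; lia).
  replace (Nat.div2 (2*i)) with i in H by (symmetry; apply Nat.div2_double).
  replace (Nat.div2 (2*i+1)) with i in H0 by (replace (2*i+1)%nat with (S (2*i)) by lia; symmetry; apply Nat.div2_succ_double).
  auto. Qed.

Lemma box_diam m r k y z i : box m r k y -> box m r k z -> (i <= m)%nat -> tdist (y i) (z i) < 4 * r.
Proof. intros Hy Hz Hi. destruct (Hy i Hi) as [A1 B1]; destruct (Hz i Hi) as [A2 B2].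
  pose proof (tdist_le_abs (y i) (z i)).
  pose proof (Rabs_triang (ta (y i) - cen r (dec k (2*i))) (cen r (dec k (2*i)) - ta (z i))).
  pose proof (Rabs_triang (tb (y i) - cen r (dec k (2*i+1))) (cen r (dec k (2*i+1)) - tb (z i))).
  rewrite (Rabs_minus_sym (cen r _) (ta (z i))) in H0. rewrite (Rabs_minus_sym (cen r _) (tb (z i))) in H1.
  replace (ta (y i) - cen r (dec k (2 * i)) + (cen r (dec k (2 * i)) - ta (z i))) with (ta (y i) - ta (z i)) in H0 by ring.
  replace (tb (y i) - cen r (dec k (2 * i + 1)) + (cen r (dec k (2 * i + 1)) - tb (z i))) with (tb (y i) - tb (z i)) in H1 by ring.
  lra. Qed.

Lemma cpgt_top G tau : compatible_polish_group_topology G tau -> is_topology tau.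
Proof. intros [[T _] _]; exact T. Qed.
Lemma cpgt_gt G tau : compatible_polish_group_topology G tau -> group_topology G tau.
Proof. intros [_ [GT _]]; exact GT. Qed.
Lemma cpgt_baire G tau : compatible_polish_group_topology G tau ->
  forall U, tau U -> (exists x, U x) -> ~ meager tau U.
Proof. intros [[T [_ [d [Hd [Hc Ho]]]]] _]. apply (metric_baire tau d); auto. Qed.

Lemma incl_cont G (HG : subgroup G) (HB : borel TN_open G) tau (Hc : compatible_polish_group_topology G tau) :
  forall m d, 0 < d -> exists W, tau W /\ W (gone G HG) /\
    forall w, W w -> forall i, (i <= m)%nat -> tdist (proj1_sig w i) tone < d.
Proof. intros m d Hd. pose proof (cpgt_top G tau Hc) as Tt. pose proof (cpgt_gt G tau Hc) as GT.
  pose proof (cpgt_baire G tau Hc) as Hb.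
  set (r := d / 4). assert (Hr : 0 < r) by (unfold r; lra).
  set (A := fun k (g : Gsub G) => box m r k (proj1_sig g)).
  assert (HBP : forall k, BP tau (A k)).
  { intros k. apply borel_BP; auto. apply (proj2 (proj2 Hc)).
    apply (borel_ext TN_open (fun x => G x /\ box m r k x)).
    - intros x; split. intros [Gx Bx]. exists (exist _ x Gx); auto.
      intros [g [Hg Ag]]. subst. split. apply proj2_sig. exact Ag.
    - apply borel_inter; auto. apply borel_open, box_open. }
  assert (Hk : exists k, ~ meager tau (A k)).
  { apply NNPP; intros Hn. apply (Hb (fun _ => True)). apply open_true; auto. exists (gone G HG); auto.
    apply (meager_sub tau _ (fun g => exists k, A k g)).
    intros g _. destruct (box_cover m r (proj1_sig g) Hr) as [k Hk]. exists k; exact Hk.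
    apply meager_union. intros k. apply NNPP; intros Hm. apply Hn; eauto. }
  destruct Hk as [k Hk].
  destruct (pettis (Gatg G HG tau Tt GT Hb) (A k) (HBP k) Hk) as [W [OW [W1 HW]]].
  exists W. split; auto. split; auto. intros w Ww i Hi. destruct (HW w Ww) as [a [b [Aa [Ab E]]]].
  rewrite E. simpl. unfold TNmul, TNinv. rewrite tdist_div_one.
  pose proof (box_diam m r k _ _ i Aa Ab Hi). unfold r in *; lra. Qed.

Lemma tdiv_mul y x : tmul (tmul y (tinv x)) x = y.
Proof. rewrite <- tmul_assoc, tmul_inv_l, tmul_one_r; auto. Qed.

Lemma act_cont G (HG : subgroup G) (HB : borel TN_open G) tau (Hc : compatible_polish_group_topology G tau) :
  action_continuous G tau.
Proof. pose proof (cpgt_top G tau Hc) as Tt. pose proof (cpgt_gt G tau Hc) as GT.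
  intros W g x OW Wgx. destruct (OW _ Wgx) as [n [e [He H]]].
  destruct (incl_cont G HG HB tau Hc n (e/2) ltac:(lra)) as [W0 [OW0 [W01 HW0]]].
  exists (fun g' => W0 (gmul G HG (ginv G HG g) g')), (cyl x n (e/2)). split.
  apply g_mul_open; auto. split. apply cyl_open. split.
  rewrite gmul_comm, gmul_inv; auto. split. intros i _; rewrite tdist_refl; lra.
  intros g' x' Hg' Hx'. apply H. intros i Hi. unfold act, TNmul.
  eapply Rle_lt_trans. apply tdist_mul2. specialize (HW0 _ Hg' i Hi). specialize (Hx' i Hi).
  simpl in HW0. unfold TNmul, TNinv in HW0. rewrite tmul_comm, tdist_div_one, tdist_sym in HW0. lra. Qed.

Lemma orbit_dense G (HG : subgroup G) (HD : strongly_dense G) x : dense TN_open (@orbit G x).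
Proof. intros y U OU Uy. destruct (OU y Uy) as [n [e [He H]]].
  destruct (HD n (fun i => tmul (y i) (tinv (x i)))) as [g [Gg Hg]].
  exists (act (exist _ g Gg : Gsub G) x). split.
  - apply H. intros i Hi. unfold act, TNmul; simpl. rewrite Hg by auto. rewrite tdiv_mul, tdist_refl; auto.
  - exists (exist _ g Gg); auto. Qed.

Lemma G_meager G (HG : subgroup G) (HP : proper_subgroup G) (HB : borel TN_open G) (HD : strongly_dense G) :
  meager TN_open G.
Proof. apply NNPP; intros Hm.
  destruct (pettis TNatg G (borel_BP TN_open TN_top G HB) Hm) as [W [OW [W1 HW]]].
  simpl in *. destruct HP as [z nz]. destruct (OW TNone W1) as [n [e [He H]]].
  destruct (HD n z) as [h [Gh Hh]].
  assert (Wz : W (TNmul (TNinv h) z)).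
  { apply H. intros i Hi. unfold TNmul, TNinv, TNone. rewrite Hh by auto. rewrite tmul_inv_l, tdist_refl; auto. }
  destruct (HW _ Wz) as [a [b [Ga [Gb E]]]]. apply nz.
  assert (z = TNmul h (TNmul a (TNinv b))). { rewrite <- E, TNmul_assoc, TNmul_inv, TNmul_one; auto. }
  rewrite H0. destruct HG as [_ [Hmul Hinv]]. auto. Qed.

Lemma orbit_meager G (HG : subgroup G) (HP : proper_subgroup G) (HB : borel TN_open G) (HD : strongly_dense G) x :
  meager TN_open (@orbit G x).
Proof. apply (meager_sub TN_open _ (fun y => G (TNmul (TNinv x) y))).
  - intros y [g E]. subst y. unfold act. rewrite (TNmul_comm (proj1_sig g) x), TNmul_assoc, (TNmul_comm (TNinv x)),
      TNmul_inv, TNmul_one. apply proj2_sig.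
  - exact (transl_meager TNatg G (TNinv x) (G_meager G HG HP HB HD)). Qed.

Fixpoint tpow (a : Tpt) (r : nat) : Tpt := match r with 0%nat => tone | S r' => tmul a (tpow a r') end.

Lemma tpow_dist a b r : tdist (tpow a r) (tpow b r) <= INR r * tdist a b.
Proof. induction r. simpl. rewrite tdist_refl; lra.
  simpl tpow. eapply Rle_trans. apply tdist_mul2. rewrite S_INR. lra. Qed.
Lemma tpow_one r : tpow tone r = tone.
Proof. induction r; simpl; auto. rewrite IHr, tmul_one_l; auto. Qed.
Lemma tpow_double a p : tpow a (2 * p) = tpow (tmul a a) p.
Proof. induction p. reflexivity. replace (2 * S p)%nat with (S (S (2 * p))) by lia. cbn [tpow].
  rewrite IHp, tmul_assoc; auto. Qed.

Lemma tsqrt_ok (z : Tpt) :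
  let a := ta z in let b := tb z in
  fst (sqrt ((1+a)/2), if Rlt_dec b 0 then - sqrt ((1-a)/2) else sqrt ((1-a)/2)) *
  fst (sqrt ((1+a)/2), if Rlt_dec b 0 then - sqrt ((1-a)/2) else sqrt ((1-a)/2)) +
  snd (sqrt ((1+a)/2), if Rlt_dec b 0 then - sqrt ((1-a)/2) else sqrt ((1-a)/2)) *
  snd (sqrt ((1+a)/2), if Rlt_dec b 0 then - sqrt ((1-a)/2) else sqrt ((1-a)/2)) = 1.
Proof. intros a b; simpl. pose proof (tnorm z). fold a b in H.
  assert (0 <= (1+a)/2) by nra. assert (0 <= (1-a)/2) by nra.
  destruct (Rlt_dec b 0); [replace (- sqrt ((1 - a) / 2) * - sqrt ((1 - a) / 2)) with (sqrt ((1 - a) / 2) * sqrt ((1 - a) / 2)) by ring|];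
  rewrite !sqrt_sqrt by auto; lra. Qed.

Definition tsqrt (z : Tpt) : Tpt := exist _ _ (tsqrt_ok z).

Lemma tsqrt_sq z : tmul (tsqrt z) (tsqrt z) = z.
Proof. pose proof (tnorm z). set (a := ta z) in *; set (b := tb z) in *.
  assert (0 <= (1+a)/2) by nra. assert (0 <= (1-a)/2) by nra.
  assert (E : sqrt ((1+a)/2) * sqrt ((1-a)/2) = Rabs (b / 2)).
  { rewrite <- sqrt_mult by auto. replace ((1 + a) / 2 * ((1 - a) / 2)) with (Rsqr (b/2)) by (unfold Rsqr; nra).
    apply sqrt_Rsqr_abs. }
  apply teq; tsimp; unfold ta at 1 2, tb at 1 2; simpl; fold a b.
  - destruct (Rlt_dec b 0); [replace (- sqrt ((1 - a) / 2) * - sqrt ((1 - a) / 2)) with (sqrt ((1 - a) / 2) * sqrt ((1 - a) / 2)) by ring|];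
    rewrite !sqrt_sqrt by auto; lra.
  - destruct (Rlt_dec b 0).
    + rewrite Rabs_left in E by lra. nra.
    + rewrite Rabs_right in E by lra. nra. Qed.

Lemma sqrt_ge_self u : 0 <= u <= 1 -> u <= sqrt u.
Proof. intros H. pose proof (sqrt_pos u). assert (sqrt u <= 1) by (rewrite <- sqrt_1; apply sqrt_le_1_alt; lra).
  pose proof (sqrt_sqrt u ltac:(lra)). nra. Qed.

Lemma tsqrt_tsq z : tsq (tsqrt z) tone <= tsq z tone / 2.
Proof. pose proof (tnorm z). unfold tsq. tsimp. set (a := ta z) in *; set (b := tb z) in *.
  unfold ta at 1 2, tb at 1 2; simpl; fold a b.
  assert (0 <= (1+a)/2) by nra. assert (0 <= (1-a)/2) by nra.
  assert (Hs : (if Rlt_dec b 0 then - sqrt ((1 - a) / 2) else sqrt ((1 - a) / 2)) * (if Rlt_dec b 0 then - sqrt ((1 - a) / 2) else sqrt ((1 - a) / 2)) = (1-a)/2).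
  { destruct (Rlt_dec b 0); [replace (- sqrt ((1 - a) / 2) * - sqrt ((1 - a) / 2)) with (sqrt ((1 - a) / 2) * sqrt ((1 - a) / 2)) by ring|];
    rewrite !sqrt_sqrt by auto; lra. }
  replace ((if Rlt_dec b 0 then - sqrt ((1 - a) / 2) else sqrt ((1 - a) / 2)) - 0) with
    (if Rlt_dec b 0 then - sqrt ((1 - a) / 2) else sqrt ((1 - a) / 2)) by ring.
  rewrite Hs. pose proof (sqrt_sqrt ((1+a)/2) H0). pose proof (sqrt_ge_self ((1+a)/2) ltac:(nra)). nra. Qed.

Fixpoint tsqrtK (K : nat) (z : Tpt) : Tpt := match K with 0%nat => z | S K' => tsqrt (tsqrtK K' z) end.

Lemma tsqrtK_pow K z : tpow (tsqrtK K z) (2 ^ K) = z.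
Proof. induction K. simpl. apply tmul_one_r. change (2 ^ S K)%nat with (2 * 2 ^ K)%nat.
  simpl tsqrtK. rewrite tpow_double, tsqrt_sq; auto. Qed.

Lemma tsqrtK_tsq K z : tsq (tsqrtK K z) tone <= 4 * p2 K.
Proof. induction K. simpl. unfold p2; simpl. pose proof (tnorm z). unfold tsq; tsimp.
  pose proof (ta_bound z). nra.
  simpl tsqrtK. pose proof (tsqrt_tsq (tsqrtK K z)). rewrite p2_S. lra. Qed.

Lemma troot rho : 0 < rho -> exists M, (1 <= M)%nat /\ forall t, exists w, tpow w M = t /\ tdist w tone < rho.
Proof. intros Hr. destruct (p2_small (rho * rho / 4) ltac:(nra)) as [K HK]. exists (2 ^ K)%nat. split.
  pose proof (Nat.pow_nonzero 2 K); lia.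
  intros t. exists (tsqrtK K t). split. apply tsqrtK_pow.
  pose proof (tsqrtK_tsq K t). rewrite <- tdist_sq in H. pose proof (tdist_pos (tsqrtK K t) tone).
  apply NNPP; intros Hc. nra. Qed.

Lemma aux_dist gg g0 s y : tdist (tmul gg (tinv g0)) y = tdist (tmul (tmul g0 s) y) (tmul gg s).
Proof. rewrite <- (tdist_mul_r (tmul g0 s)). rewrite tdist_sym. f_equal.
  rewrite tmul_comm; auto.
  rewrite <- tmul_assoc, (tmul_assoc (tinv g0)), tmul_inv_l, tmul_one_l; auto. Qed.

Lemma stepA G (HG : subgroup G) (HD : strongly_dense G) tau (Hc : compatible_polish_group_topology G tau)
 (V1 : Gsub G -> Prop) : tau V1 -> V1 (gone G HG) -> forall m, exists d, 0 < d /\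
 forall y : TN, (forall i, (i <= m)%nat -> tdist (y i) tone < d) -> forall eta, 0 < eta ->
 exists g g0, V1 g /\ V1 g0 /\ forall i, (i <= m)%nat -> tdist (tmul (proj1_sig g i) (tinv (proj1_sig g0 i))) (y i) < eta.
Proof. intros OV1 V11 m. pose proof (cpgt_top G tau Hc) as Tt. pose proof (cpgt_gt G tau Hc) as GT.
  destruct Hc as [[_ [Hsep _]] _]. destruct Hsep as [Hf | [s Hs]]. exfalso; apply (Hf (gone G HG)).
  set (Bk := fun k (y : TN) => exists g, V1 g /\ forall i, (i <= m)%nat -> y i = tmul (proj1_sig g i) (proj1_sig (s k) i)).
  assert (Hcov : forall y, exists k, Bk k y).
  { intros y. destruct (HD m y) as [h [Gh Hh]]. set (hh := exist _ h Gh : Gsub G).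
    destruct (Hs (fun t => V1 (gmul G HG hh (ginv G HG t)))) as [k Hk].
    - apply (g_inv_open G HG tau Tt GT (fun u => V1 (gmul G HG hh u))). apply g_mul_open; auto.
    - exists hh. rewrite gmul_inv; auto.
    - exists k, (gmul G HG hh (ginv G HG (s k))). split; auto. intros i Hi. simpl. unfold TNmul, TNinv.
      rewrite tdiv_mul. simpl. symmetry; auto. }
  assert (Hk : exists k, ~ nowhere_dense TN_open (closure TN_open (Bk k))).
  { apply NNPP; intro Hn. apply (TN_baire (fun _ => True) (open_true _ TN_top) (ex_intro _ TNone I)).
    exists (fun k => closure TN_open (Bk k)). split. intros k; apply NNPP; intros Hc'; apply Hn; eauto.
    intros x _. destruct (Hcov x) as [k Hk]; exists k; apply closure_incl; auto. }
  destruct Hk as [k Hk]. unfold nowhere_dense in Hk. apply not_all_ex_not in Hk as [y0 Hy0]. apply NNPP in Hy0.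
  destruct Hy0 as [Q [OQ [Qy0 HQ]]].
  destruct (closure_closure _ _ _ (HQ y0 Qy0) Q OQ Qy0) as [b [Qb Bb]].
  destruct Bb as [g0 [Vg0 Hb]].
  destruct (OQ b Qb) as [n' [e' [He' HQb]]].
  exists e'. split; auto. intros y Hy eta Heta.
  set (p := fun i => if Nat.leb i m then tmul (b i) (y i) else b i).
  assert (Qp : Q p).
  { apply HQb. intros i Hi. unfold p. destruct (Nat.leb i m) eqn:E.
    - apply Nat.leb_le in E. rewrite <- (tmul_one_r (b i)) at 1. rewrite tdist_mul_l, tdist_sym. apply Hy; auto.
    - rewrite tdist_refl; auto. }
  assert (Cp : cyl p m eta p). { intros i _. rewrite tdist_refl; auto. }
  destruct (closure_closure _ _ _ (HQ p Qp) (cyl p m eta) (cyl_open p m eta) Cp) as [q [Hq Bq]].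
  destruct Bq as [g [Vg Hqg]].
  exists g, g0. split; auto. split; auto. intros i Hi.
  specialize (Hq i Hi); specialize (Hqg i Hi); specialize (Hb i Hi). unfold p in Hq.
  rewrite (proj2 (Nat.leb_le i m) Hi) in Hq.
  rewrite (aux_dist _ _ (proj1_sig (s k) i)), <- Hb, <- Hqg. exact Hq. Qed.

Lemma iter_act G (h : Gsub G) (x1 : TN) r i : Nat.iter r (@act G h) x1 i = tmul (tpow (proj1_sig h i) r) (x1 i).
Proof. induction r; simpl. rewrite tmul_one_l; auto. unfold act at 1, TNmul at 1. rewrite IHr, tmul_assoc; auto. Qed.

Lemma lo_interior G (HG : subgroup G) (HD : strongly_dense G) tau (Hc : compatible_polish_group_topology G tau)
  U V x : TN_open U -> symmetric_open_nbhd_id G tau V -> U x ->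
  exists y, Defs.interior TN_open (closure TN_open (local_orbit x U V)) y.
Proof. intros HU HV Ux. pose proof (cpgt_top G tau Hc) as Tt. pose proof (cpgt_gt G tau Hc) as GT.
  destruct (HU x Ux) as [n [eps [Heps HUx]]].
  destruct HV as [OV [V1d Vinv]].
  destruct (GT V (gone G HG) (gone G HG) (gone G HG) OV) as [U' [V' [OU' [OV' [U'1 [V'1 HUV]]]]]].
  { simpl. rewrite TNinv_one, TNmul_one; auto. }
  { apply V1d; auto. }
  set (V1 := fun g => U' g /\ V' g).
  assert (OV1 : tau V1) by (apply open_inter; auto).
  assert (HV1 : forall g g0, V1 g -> V1 g0 -> V (gmul G HG g (ginv G HG g0))).
  { intros g g0 [Ug _] [_ Vg0]. apply (HUV g g0); auto. }
  destruct (stepA G HG HD tau Hc V1 OV1 (conj U'1 V'1) n) as [dn [Hdn Hstepn]].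
  set (d' := Rmin dn (eps/2)).
  assert (Hd' : 0 < d') by (apply Rmin_glb_lt; lra).
  assert (Hd'1 : d' <= dn) by apply Rmin_l. assert (Hd'2 : d' <= eps/2) by apply Rmin_r.
  exists x. exists (cyl x n d'). split. apply cyl_open. split. intros i _; rewrite tdist_refl; auto.
  intros z Hz R OR Rz.
  destruct (OR z Rz) as [m0 [e0 [He0 HR]]].
  set (m := max m0 n). set (eta := Rmin e0 (eps/4)).
  assert (Heta : 0 < eta) by (apply Rmin_glb_lt; lra).
  assert (Heta1 : eta <= e0) by apply Rmin_l. assert (Heta2 : eta <= eps/4) by apply Rmin_r.
  destruct (Hstepn (fun i => tmul (z i) (tinv (x i)))) with (eta := eta/2) as [g [g0 [Vg [Vg0 Hg]]]].
  { intros i Hi. rewrite tdist_div_one, tdist_sym. specialize (Hz i Hi). lra. }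
  { lra. }
  set (h0 := gmul G HG g (ginv G HG g0)).
  set (x1 := act h0 x).
  assert (Hx1z : forall i, (i <= n)%nat -> tdist (x1 i) (z i) < eta/2).
  { intros i Hi. unfold x1, act, TNmul. rewrite <- (tdiv_mul (z i) (x i)). rewrite tdist_mul_r.
    apply Hg; auto. }
  assert (Hx1x : forall i, (i <= n)%nat -> tdist (x i) (x1 i) < eps/2 + eta/2).
  { intros i Hi. pose proof (tdist_tri (x i) (z i) (x1 i)). specialize (Hz i Hi). specialize (Hx1z i Hi).
    rewrite tdist_sym in Hx1z. lra. }
  assert (Ux1 : U x1). { apply HUx. intros i Hi. specialize (Hx1x i Hi). lra. }
  assert (C1 : lchain U V x x1). { apply lchainS; auto. apply lchain0; auto. apply HV1; auto. }
  destruct (stepA G HG HD tau Hc V1 OV1 (conj U'1 V'1) m) as [dm [Hdm Hstepm]].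
  destruct (troot dm Hdm) as [M [HM Hroot]].
  destruct (choice_nat (fun i w => tpow w M = tmul (z i) (tinv (x1 i)) /\ tdist w tone < dm)
     (fun i => Hroot (tmul (z i) (tinv (x1 i))))) as [w Hw].
  set (y := fun i => if Nat.leb i n then tone else w i).
  assert (HMpos : 0 < INR M + 1) by (pose proof (pos_INR M); lra).
  set (th := eta / (4 * (INR M + 1))).
  assert (Hth : 0 < th) by (unfold th; apply Rdiv_lt_0_compat; lra).
  assert (HMth : INR M * th < eta / 4).
  { unfold th. replace (INR M * (eta / (4 * (INR M + 1)))) with ((eta / 4) * (INR M / (INR M + 1))) by (field; lra).
    assert (INR M / (INR M + 1) < 1) by (apply (Rmult_lt_reg_r (INR M + 1)); auto; field_simplify; lra).
    nra. }
  destruct (Hstepm y) with (eta := th) as [g1 [g10 [Vg1 [Vg10 Hg1]]]].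
  { intros i Hi. unfold y. destruct (Nat.leb i n). rewrite tdist_refl; lra. apply Hw. }
  { auto. }
  set (h := gmul G HG g1 (ginv G HG g10)).
  assert (Vh : V h) by (apply HV1; auto).
  assert (Hh : forall i, (i <= m)%nat -> tdist (proj1_sig h i) (y i) < th) by exact Hg1.
  assert (BndA : forall r i, (i <= n)%nat -> tdist (x1 i) (Nat.iter r (@act G h) x1 i) <= INR r * th).
  { intros r i Hi. rewrite iter_act. rewrite <- (tmul_one_l (x1 i)) at 1. rewrite tdist_mul_r.
    rewrite <- (tpow_one r). eapply Rle_trans. apply tpow_dist. apply Rmult_le_compat_l. apply pos_INR.
    specialize (Hh i ltac:(unfold m; lia)). unfold y in Hh. rewrite (proj2 (Nat.leb_le i n) Hi) in Hh.
    rewrite tdist_sym; lra. }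
  assert (UIt : forall r, (r <= M)%nat -> U (Nat.iter r (@act G h) x1)).
  { intros r Hr. apply HUx. intros i Hi. pose proof (tdist_tri (x i) (x1 i) (Nat.iter r (@act G h) x1 i)).
    pose proof (BndA r i Hi). pose proof (Hx1x i Hi).
    assert (INR r * th <= INR M * th) by (apply Rmult_le_compat_r; [lra | apply le_INR; auto]). lra. }
  assert (Chain : forall r, (r <= M)%nat -> lchain U V x (Nat.iter r (@act G h) x1)).
  { induction r; intros Hr. exact C1. simpl. apply lchainS; auto. apply IHr; lia. apply (UIt (S r)); auto. }
  destruct M as [|M']. lia.
  exists (Nat.iter (S M') (@act G h) x1). split.
  - apply HR. intros i Hi. destruct (le_lt_dec i n) as [Hin|Hin].
    + pose proof (tdist_tri (z i) (x1 i) (Nat.iter (S M') (@act G h) x1 i)). pose proof (BndA (S M') i Hin).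
      pose proof (Hx1z i Hin). rewrite tdist_sym in H1. lra.
    + rewrite iter_act. destruct (Hw i) as [Hwi _]. rewrite <- (tdiv_mul (z i) (x1 i)), <- Hwi.
      rewrite tdist_mul_r. eapply Rle_lt_trans. apply tpow_dist.
      specialize (Hh i ltac:(unfold m; lia)). unfold y in Hh.
      replace (Nat.leb i n) with false in Hh by (symmetry; apply Nat.leb_gt; auto).
      rewrite tdist_sym in Hh. pose proof (pos_INR (S M')).
      assert (INR (S M') * tdist (w i) (proj1_sig h i) <= INR (S M') * th) by (apply Rmult_le_compat_l; lra).
      lra.
  - exists (Nat.iter M' (@act G h) x1), h. split. apply Chain; lia. split; auto. split.
    apply (UIt (S M')); auto. reflexivity. Qed.

Theorem mainTheorem1 (G : TN -> Prop) :
  subgroup G -> proper_subgroup G -> polishable G -> strongly_dense G ->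
  forall tau : (Gsub G -> Prop) -> Prop,
    compatible_polish_group_topology G tau -> turbulent G tau.
Proof.
  intros HG HP [HB _] HD tau Hc. split. apply act_cont; auto. split.
  intros; apply orbit_dense; auto. split. intros; apply orbit_meager; auto.
  intros U V x HU HV Ux. apply (lo_interior G HG HD tau Hc); auto.
Qed.
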